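(* Let $Z$ be a Banach space and $E,F$ closed subspaces of $Z$. Then $d_K(Z/E,Z/F)\le 2\Lambda(E,F)$.
   Context: For closed subspaces $E,F$ of $Z$, the gap $\Lambda(E,F)$ is the Hausdorff distance in $Z$ between the closed unit balls $B_E$ and $B_F$. The Kadets distance $d_K(X,Y)$ is the infimum, over all Banach spaces $W$ and linear isometric embeddings $U:X\to W$, $V:Y\to W$, of $\Lambda(UX,VY)$. *)

(* Defs.v *)
From HB Require Import structures.
From mathcomp Require Import all_boot all_order all_algebra.
From mathcomp Require Import all_classical all_reals all_analysis.
From mathcomp Require Import ring lra.
Set Implicit Arguments.
Unset Strict Implicit.
Unset Printing Implicit Defensive.
Import Order.TTheory GRing.Theory Num.Theory.
Import numFieldNormedType.Exports.
Local Open Scope classical_set_scope.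
Local Open Scope ring_scope.

Record closed_subspace (R : realType) (Z : normedModType R) := ClosedSubspace {
  cs_set :> set Z;
  cs_0 : cs_set 0;
  cs_lin : forall (a : R) (x y : Z), cs_set x -> cs_set y -> cs_set (a *: x + y);
  cs_closed : closed cs_set }.

Section Quotient.
Context {R : realType} {Z : normedModType R} (E : closed_subspace Z).

Local Notation S := (cs_set E).

Lemma csD x y : S x -> S y -> S (x + y).
Proof. by move=> Ex Ey; have := cs_lin 1 Ex Ey; rewrite scale1r. Qed.

Lemma csZ (a : R) x : S x -> S (a *: x).
Proof. by move=> Ex; have := cs_lin a Ex (cs_0 E); rewrite addr0. Qed.

Lemma csN x : S x -> S (- x).
Proof. by move=> /(csZ (-1)); rewrite scaleN1r. Qed.

Lemma csB x y : S x -> S y -> S (x - y).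
Proof. by move=> Ex Ey; apply: csD => //; exact: csN. Qed.

Definition coset (z : Z) : set Z := [set y | S (y - z)].

Record quot_space := QuotSpace {
  qset : set Z ;
  qsetP : exists z, qset = coset z }.

HB.instance Definition _ := gen_eqMixin quot_space.
HB.instance Definition _ := gen_choiceMixin quot_space.

Lemma qset_inj : injective qset.
Proof.
move=> [A PA] [B PB] /= AB; subst B; congr QuotSpace; exact: Prop_irrelevance.
Qed.

Definition qpi (z : Z) : quot_space := @QuotSpace (coset z) (ex_intro _ z erefl).

Lemma coset_eq x y : coset x = coset y <-> S (x - y).
Proof.
split=> [cxy|Exy].
  have : coset x y by rewrite cxy /coset /= subrr; exact: cs_0.
  by rewrite /coset /= => /csN; rewrite opprB.
apply/funext => w; apply/propext; rewrite /coset /=; split => H.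
  by have := csD H Exy; rewrite addrA subrK.
by have := csB H Exy; rewrite opprB addrA subrK.
Qed.

Lemma qpi_eq x y : qpi x = qpi y <-> S (x - y).
Proof.
split=> [/(congr1 qset)/coset_eq//|/coset_eq cxy]; exact: qset_inj.
Qed.

Definition qrep (q : quot_space) : Z := projT1 (cid (qsetP q)).

Lemma qrepK q : qpi (qrep q) = q.
Proof. by apply: qset_inj; rewrite /qrep; case: cid => z /= ->. Qed.

Lemma qind (P : quot_space -> Prop) : (forall z, P (qpi z)) -> forall q, P q.
Proof. by move=> H q; rewrite -(qrepK q). Qed.

Lemma qrepP z : S (qrep (qpi z) - z).
Proof. by apply/qpi_eq; rewrite qrepK. Qed.

Definition qzero := qpi 0.
Definition qadd q1 q2 := qpi (qrep q1 + qrep q2).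
Definition qopp q := qpi (- qrep q).
Definition qscale (a : R) q := qpi (a *: qrep q).

Lemma qaddE x y : qadd (qpi x) (qpi y) = qpi (x + y).
Proof.
apply/qpi_eq; rewrite opprD addrACA; exact: csD (qrepP x) (qrepP y).
Qed.

Lemma qoppE x : qopp (qpi x) = qpi (- x).
Proof. by apply/qpi_eq; rewrite opprK addrC -opprB; exact/csN/qrepP. Qed.

Lemma qscaleE a x : qscale a (qpi x) = qpi (a *: x).
Proof. by apply/qpi_eq; rewrite -scalerBr; exact/csZ/qrepP. Qed.

Lemma qaddA : associative qadd.
Proof.
by elim/qind => x; elim/qind => y; elim/qind => z; rewrite !qaddE addrA.
Qed.

Lemma qaddC : commutative qadd.
Proof. by elim/qind => x; elim/qind => y; rewrite !qaddE addrC. Qed.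

Lemma qadd0 : left_id qzero qadd.
Proof. by elim/qind => x; rewrite /qzero qaddE add0r. Qed.

Lemma qaddN : left_inverse qzero qopp qadd.
Proof. by elim/qind => x; rewrite qoppE qaddE addNr. Qed.

HB.instance Definition _ := GRing.isZmodule.Build quot_space qaddA qaddC qadd0 qaddN.

Lemma qpiD x y : qpi x + qpi y = qpi (x + y).
Proof. exact: qaddE. Qed.

Lemma qpi0 : 0 = qpi 0.
Proof. by []. Qed.

Lemma qscaleA a b v : qscale a (qscale b v) = qscale (a * b) v.
Proof. by elim/qind: v => x; rewrite !qscaleE scalerA. Qed.

Lemma qscale1 : left_id 1 qscale.
Proof. by elim/qind => x; rewrite qscaleE scale1r. Qed.

Lemma qscaleDr : right_distributive qscale +%R.
Proof.
move=> a; elim/qind => x; elim/qind => y.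
by rewrite qpiD !qscaleE qpiD scalerDr.
Qed.

Lemma qscaleDl v : {morph qscale^~ v : a b / a + b}.
Proof.
elim/qind: v => x a b.
by rewrite !qscaleE qpiD scalerDl.
Qed.

HB.instance Definition _ :=
  GRing.Zmodule_isLmodule.Build R quot_space qscaleA qscale1 qscaleDr qscaleDl.

Lemma qpiZ a x : a *: qpi x = qpi (a *: x).
Proof. exact: qscaleE. Qed.

Definition qnorm (q : quot_space) : R := inf [set `|z| | z in qset q].

Lemma qnorm_has_inf q : has_inf [set `|z| | z in qset q].
Proof.
split; last by exists 0 => _ [z _ <-].
case: (qsetP q) => z ->; exists `|z|; exists z => //.
by rewrite /coset /= subrr; exact: cs_0.
Qed.

Lemma qnorm_le q z : qset q z -> qnorm q <= `|z|.
Proof. by move=> qz; apply: (ge_inf (qnorm_has_inf q).2); exists z. Qed.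

Lemma qnorm_ge0 q : 0 <= qnorm q.
Proof. by apply: lb_le_inf; [exact: (qnorm_has_inf q).1|move=> _ [z _ <-]]. Qed.

Lemma qnorm_approx q e : 0 < e -> exists2 z, qset q z & `|z| < qnorm q + e.
Proof.
move=> e0; have [_ [z qz <-] ?] := inf_adherent e0 (qnorm_has_inf q).
by exists z.
Qed.

Lemma qnormD q1 q2 : qnorm (q1 + q2) <= qnorm q1 + qnorm q2.
Proof.
elim/qind: q1 => x; elim/qind: q2 => y; rewrite qpiD.
apply/ler_addgt0Pr => e e0.
have e20 : 0 < e / 2 by rewrite divr_gt0.
have [b xb bl] := qnorm_approx (qpi x) e20.
have [c yc cl] := qnorm_approx (qpi y) e20.
have bc : qset (qpi (x + y)) (b + c).
  by rewrite /= /coset /= opprD addrACA; exact: csD.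
apply: (le_trans (qnorm_le bc)); apply: (le_trans (ler_normD b c)).
have -> : e = e / 2 + e / 2 by rewrite -splitr.
lra.
Qed.

Lemma qnormZle l q : qnorm (l *: q) <= `|l| * qnorm q.
Proof.
elim/qind: q => x; rewrite qpiZ.
apply/ler_addgt0Pr => e e0.
have l10 : 0 < `|l| + 1 by rewrite ltr_wpDl.
have d0 : 0 < e / (`|l| + 1) by rewrite divr_gt0.
have [b xb bl] := qnorm_approx (qpi x) d0.
have lb : qset (qpi (l *: x)) (l *: b).
  by rewrite /= /coset /= -scalerBr; exact: csZ.
apply: (le_trans (qnorm_le lb)); rewrite normrZ.
apply: (le_trans (ler_wpM2l (normr_ge0 l) (ltW bl))).
rewrite mulrDr lerD2l mulrA ler_pdivrMr //.
have := normr_ge0 l; nra.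
Qed.

Lemma qnormZ l q : qnorm (l *: q) = `|l| * qnorm q.
Proof.
have [->|l0] := eqVneq l 0.
  by rewrite normr0 mul0r; apply/le_anti; rewrite qnorm_ge0 andbT;
     have := qnormZle 0 q; rewrite normr0 mul0r.
apply/le_anti; rewrite qnormZle /=.
have := qnormZle l^-1 (l *: q); rewrite scalerA mulVf // scale1r normrV ?unitfE //.
by rewrite ler_pdivlMl ?normr_gt0.
Qed.

Lemma qnorm_eq0 q : qnorm q = 0 -> q = 0.
Proof.
elim/qind: q => x qx0; rewrite qpi0; apply/qpi_eq; rewrite subr0.
apply: (@cs_closed _ _ E) => B /nbhs_ballP [e /= e0 eB].
have [b xb] := qnorm_approx (qpi x) e0; rewrite qx0 add0r => be.
exists (x - b); split; first by rewrite -opprB; exact: csN.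
by apply: eB; rewrite -ball_normE /ball_ /= opprB addrC subrK.
Qed.

HB.instance Definition _ :=
  Lmodule_isNormed.Build R quot_space qnormD qnormZ qnorm_eq0.

End Quotient.

Arguments cs_closed {R Z} c.

Section Gap.
Context {R : realType} {W : normedModType R}.

Definition unit_ball (A : set W) : set W := [set w | A w /\ `|w| <= 1].

Definition set_dist (w : W) (A : set W) : R := inf [set `|w - a| | a in A].

Definition hausdorff_dist (A B : set W) : R :=
  Num.max (sup [set set_dist a B | a in A]) (sup [set set_dist b A | b in B]).

Definition gap (E F : set W) : R := hausdorff_dist (unit_ball E) (unit_ball F).

End Gap.

Definition isometric_embedding {R : realType} {X W : normedModType R}
  (U : {linear X -> W}) : Prop := forall x, `|U x| = `|x|.

Definition kadets_dist {R : realType} (X Y : normedModType R) : R :=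
  inf [set r | exists (W : completeNormedModType R)
                      (U : {linear X -> W}) (V : {linear Y -> W}),
               [/\ isometric_embedding U, isometric_embedding V &
                   r = gap (range U) (range V)]].

(* Main.v *)
Require Import Defs.
From HB Require Import structures.
From mathcomp Require Import all_boot all_order all_algebra.
From mathcomp Require Import all_classical all_reals all_analysis.
From mathcomp Require Import ring lra.
Import Order.TTheory GRing.Theory Num.Theory.
Import numFieldNormedType.Exports.
Local Open Scope classical_set_scope.
Local Open Scope ring_scope.

Section Glue.
Context {R : realType} {W0 : completeNormedModType R} {Z : normedModType R}.
Definition ghyp (A B : Z -> W0) (c : R) :=
  [/\ (forall a x y, A (a *: x + y) = a *: A x + A y),
      (forall a x y, B (a *: x + y) = a *: B x + B y),
      (forall z, `|A z| <= `|z|), (forall z, `|B z| <= `|z|) & 0 < c].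
Variables (A B : Z -> W0) (c : R).
Hypothesis HP : ghyp A B c.
Lemma Alin a x y : A (a *: x + y) = a *: A x + A y. Proof. by case: HP. Qed.
Lemma Blin a x y : B (a *: x + y) = a *: B x + B y. Proof. by case: HP. Qed.
Lemma Ale z : `|A z| <= `|z|. Proof. by case: HP. Qed.
Lemma Ble z : `|B z| <= `|z|. Proof. by case: HP. Qed.
Lemma c0 : 0 < c. Proof. by case: HP. Qed.

Lemma A0 : A 0 = 0.
Proof. by apply/normr0_eq0/le_anti; rewrite normr_ge0 andbT; have := Ale 0; rewrite normr0. Qed.
Lemma B0 : B 0 = 0.
Proof. by apply/normr0_eq0/le_anti; rewrite normr_ge0 andbT; have := Ble 0; rewrite normr0. Qed.
Lemma AD x y : A (x + y) = A x + A y.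
Proof. by have := Alin 1 x y; rewrite !scale1r. Qed.
Lemma BD x y : B (x + y) = B x + B y.
Proof. by have := Blin 1 x y; rewrite !scale1r. Qed.
Lemma AZ a x : A (a *: x) = a *: A x.
Proof. by have := Alin a x 0; rewrite !addr0 A0 addr0. Qed.
Lemma BZ a x : B (a *: x) = a *: B x.
Proof. by have := Blin a x 0; rewrite !addr0 B0 addr0. Qed.

Definition glued (_ : ghyp A B c) : Type := (W0 * W0)%type.
Local Notation G := (glued HP).
HB.instance Definition _ := Choice.copy G (W0 * W0)%type.
HB.instance Definition _ := GRing.Lmodule.copy G (W0 * W0)%type.

Definition gval (p : G) (z : Z) := `|p.1 - A z| + `|p.2 + B z| + c * `|z|.
Definition gset (p : G) := [set gval p z | z in [set: Z]].
Definition gn p := inf (gset p).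

Lemma gval_ge0 p z : 0 <= gval p z.
Proof. rewrite /gval; have := normr_ge0 z; have := normr_ge0 (p.1 - A z); have := normr_ge0 (p.2 + B z); have := c0; nra. Qed.

Lemma gset_ne p : gset p !=set0.
Proof. by exists (gval p 0); exists 0. Qed.

Lemma gset_lb p : has_lbound (gset p).
Proof. by exists 0 => _ [z _ <-]; exact: gval_ge0. Qed.

Lemma gn_ub p z : gn p <= gval p z.
Proof. by apply: (ge_inf (gset_lb p)); exists z. Qed.

Lemma gn_ge0 p : 0 <= gn p.
Proof. by apply: lb_le_inf; [exact: gset_ne| move=> _ [z _ <-]; exact: gval_ge0]. Qed.

Lemma gn_approx p e : 0 < e -> exists z, gval p z < gn p + e.
Proof.
move=> e0; have [_ [z _ <-] ?] := inf_adherent e0 (conj (gset_ne p) (gset_lb p)).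
by exists z.
Qed.

Lemma gn_le p r : (forall z, r <= gval p z) -> r <= gn p.
Proof. by move=> H; apply: lb_le_inf; [exact: gset_ne| move=> _ [z _ <-]]. Qed.

Definition gm := Num.min 1 c.
Lemma gm_gt0 : 0 < gm.
Proof. by rewrite /gm lt_min ltr01 c0. Qed.

Lemma gn_low1 p : gm * `|p.1| <= gn p.
Proof.
apply: gn_le => z; rewrite /gval.
have h1 : `|p.1| <= `|p.1 - A z| + `|A z|.
  by rewrite -[X in `|X|](subrK (A z)) ler_normD.
have := Ale z; have := normr_ge0 (p.1 - A z); have := normr_ge0 (p.2 + B z).
have := normr_ge0 (A z); have : gm <= 1 by rewrite ge_min lexx.
have : gm <= c by rewrite /gm ge_min lexx orbT.
have := gm_gt0; nra.
Qed.

Lemma gn_low2 p : gm * `|p.2| <= gn p.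
Proof.
apply: gn_le => z; rewrite /gval.
have h1 : `|p.2| <= `|p.2 + B z| + `|B z|.
  by rewrite -[X in `|X|](addrK (B z)) (le_trans (ler_normD _ _)) // normrN.
have := Ble z; have := normr_ge0 (p.1 - A z); have := normr_ge0 (p.2 + B z).
have := normr_ge0 (B z); have : gm <= 1 by rewrite ge_min lexx.
have : gm <= c by rewrite /gm ge_min lexx orbT.
have := gm_gt0; nra.
Qed.

Lemma gnD p q : gn (p + q) <= gn p + gn q.
Proof.
apply/ler_addgt0Pr => e e0.
have e20 : 0 < e / 2 by rewrite divr_gt0.
have [z1 h1] := gn_approx p _ e20.
have [z2 h2] := gn_approx q _ e20.
apply: (le_trans (gn_ub _ (z1 + z2))).
have : gval (p + q) (z1 + z2) <= gval p z1 + gval q z2.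
  rewrite /gval AD BD /=.
  have -> : p.1 + q.1 - (A z1 + A z2) = (p.1 - A z1) + (q.1 - A z2).
    by rewrite opprD addrACA.
  have -> : p.2 + q.2 + (B z1 + B z2) = (p.2 + B z1) + (q.2 + B z2).
    by rewrite addrACA.
  have := ler_normD (p.1 - A z1) (q.1 - A z2).
  have := ler_normD (p.2 + B z1) (q.2 + B z2).
  have := ler_normD z1 z2; have := c0; nra.
have -> : e = e / 2 + e / 2 by rewrite -splitr.
lra.
Qed.

Lemma gvalZ l p z : gval (l *: p) (l *: z) = `|l| * gval p z.
Proof.
rewrite /gval AZ BZ /= -scalerBr -scalerDr !normrZ; ring.
Qed.

Lemma gnZle l p : gn (l *: p) <= `|l| * gn p.
Proof.
apply/ler_addgt0Pr => e e0.
have l10 : 0 < `|l| + 1 by rewrite ltr_wpDl.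
have d0 : 0 < e / (`|l| + 1) by rewrite divr_gt0.
have [z hz] := gn_approx p _ d0.
apply: (le_trans (gn_ub _ (l *: z))); rewrite gvalZ.
apply: (le_trans (ler_wpM2l (normr_ge0 l) (ltW hz))).
rewrite mulrDr lerD2l mulrA ler_pdivrMr //.
have := normr_ge0 l; nra.
Qed.

Lemma gnZ l p : gn (l *: p) = `|l| * gn p.
Proof.
have [->|l0] := eqVneq l 0.
  rewrite normr0 mul0r; apply/le_anti; rewrite gn_ge0 andbT.
  by have := gnZle 0 p; rewrite normr0 mul0r.
apply/le_anti; rewrite gnZle /=.
have := gnZle l^-1 (l *: p); rewrite scalerA mulVf // scale1r normrV ?unitfE //.
by rewrite ler_pdivlMl ?normr_gt0.
Qed.

Lemma gn_eq0 p : gn p = 0 -> p = 0.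
Proof.
move=> h; have h1 := gn_low1 p; have h2 := gn_low2 p; rewrite h in h1 h2.
have m0 := gm_gt0.
have e1 : `|p.1| = 0 by apply/le_anti; rewrite normr_ge0 andbT -(pmulr_rle0 _ m0).
have e2 : `|p.2| = 0 by apply/le_anti; rewrite normr_ge0 andbT -(pmulr_rle0 _ m0).
by case: p e1 e2 {h h1 h2} => a b /= /normr0_eq0 -> /normr0_eq0 ->.
Qed.

HB.instance Definition _ := Lmodule_isNormed.Build R G gnD gnZ gn_eq0.


Lemma gnE (p : G) : `|p| = gn p.
Proof. by []. Qed.

Lemma gn_le_sum (p : G) : `|p| <= `|p.1| + `|p.2|.
Proof.
rewrite gnE; apply: (le_trans (gn_ub p 0)).
by rewrite /gval A0 B0 subr0 addr0 normr0 mulr0 addr0.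
Qed.

Lemma glued_complete (F : set_system G) : ProperFilter F -> cauchy F -> cvg F.
Proof.
move=> FF /cauchyP Fc.
have m0 := gm_gt0.
have c1 : cauchy (fst @ F : set_system W0).
  apply/cauchy_exP => e e0.
  have [x hx] := Fc _ (mulr_gt0 m0 e0).
  exists x.1; suff : F [set y : G | ball x.1 e y.1] by [].
  apply: filterS hx => y.
  rewrite -!ball_normE /ball_ /= => h.
  have := gn_low1 (x - y); rewrite -gnE => h'.
  have : gm * `|x.1 - y.1| < gm * e by apply: le_lt_trans h' h.
  by rewrite ltr_pM2l.
have c2 : cauchy (snd @ F : set_system W0).
  apply/cauchy_exP => e e0.
  have [x hx] := Fc _ (mulr_gt0 m0 e0).
  exists x.2; suff : F [set y : G | ball x.2 e y.2] by [].
  apply: filterS hx => y.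
  rewrite -!ball_normE /ball_ /= => h.
  have := gn_low2 (x - y); rewrite -gnE => h'.
  have : gm * `|x.2 - y.2| < gm * e by apply: le_lt_trans h' h.
  by rewrite ltr_pM2l.
have [l1 cv1] := (cvg_ex _).1 (cauchy_cvg _ c1).
have [l2 cv2] := (cvg_ex _).1 (cauchy_cvg _ c2).
apply/(cvg_ex F).2; exists ((l1, l2) : G).
apply/cvgrPdist_lt => e e0.
have e20 : 0 < e / 2 by rewrite divr_gt0.
have h1 : \forall t \near F, `|l1 - t.1| < e / 2.
  by move: cv1 => /cvgrPdist_lt; apply.
have h2 : \forall t \near F, `|l2 - t.2| < e / 2.
  by move: cv2 => /cvgrPdist_lt; apply.
near=> t.
have t1 : `|l1 - t.1| < e / 2 by near: t.
have t2 : `|l2 - t.2| < e / 2 by near: t.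
apply: (le_lt_trans (gn_le_sum _)) => /=.
have -> : e = e / 2 + e / 2 by rewrite -splitr.
lra.
Unshelve. all: by end_near.
Qed.

HB.instance Definition _ := Uniform_isComplete.Build G glued_complete.


Lemma AN z : A (- z) = - A z.
Proof. by rewrite -scaleN1r AZ scaleN1r. Qed.
Lemma BN z : B (- z) = - B z.
Proof. by rewrite -scaleN1r BZ scaleN1r. Qed.

Lemma gn_l a : (forall z, `|A z| <= `|B z| + c * `|z|) -> gn ((a, 0) : G) = `|a|.
Proof.
move=> H; apply/le_anti/andP; split.
  by apply: (le_trans (gn_ub _ 0)); rewrite /gval /= A0 B0 !subr0 !addr0 !normr0 mulr0 !addr0.
apply: gn_le => z; rewrite /gval /= add0r.
have h1 : `|a| <= `|a - A z| + `|A z|.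
  by rewrite -[X in `|X|](subrK (A z)) ler_normD.
have := H z; lra.
Qed.

Lemma gn_r b : (forall z, `|B z| <= `|A z| + c * `|z|) -> gn ((0, b) : G) = `|b|.
Proof.
move=> H; apply/le_anti/andP; split.
  by apply: (le_trans (gn_ub _ 0)); rewrite /gval /= A0 B0 !subr0 !addr0 !normr0 mulr0 !addr0 add0r.
apply: gn_le => z; rewrite /gval /= sub0r normrN.
have h1 : `|b| <= `|b + B z| + `|B z|.
  by rewrite -[X in `|X|](addrK (B z)) (le_trans (ler_normD _ _)) // normrN.
have := H z; lra.
Qed.

End Glue.

Section GapLemmas.
Context {R : realType} {W : normedModType R}.
Implicit Types (P Q : set W) (a b : W).

Lemma sd_lb a Q : has_lbound [set `|a - q| | q in Q].
Proof. by exists 0 => _ [q _ <-]. Qed.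

Lemma set_dist_le a b Q : Q b -> set_dist a Q <= `|a - b|.
Proof. by move=> Qb; apply: (ge_inf (sd_lb a Q)); exists b. Qed.

Lemma set_dist_ge0 a Q : Q !=set0 -> 0 <= set_dist a Q.
Proof.
move=> [q Qq]; apply: lb_le_inf; first by exists `|a - q|; exists q.
by move=> _ [p _ <-].
Qed.

Lemma set_dist_approx a Q e : Q !=set0 -> 0 < e ->
  exists2 b, Q b & `|a - b| < set_dist a Q + e.
Proof.
move=> [q Qq] e0.
have hi : has_inf [set `|a - q| | q in Q] by split; [exists `|a - q|; exists q|exact: sd_lb].
by have [_ [b Qb <-] ?] := inf_adherent e0 hi; exists b.
Qed.

Lemma ub0 {P} : P 0 -> unit_ball P 0.
Proof. by move=> P0; split => //; rewrite normr0 ler01. Qed.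

Lemma has_sup_sd {P Q} : P 0 -> Q 0 ->
  has_sup [set set_dist a (unit_ball Q) | a in unit_ball P].
Proof.
move=> P0 Q0; split.
  by exists (set_dist 0 (unit_ball Q)); exists 0 => //; exact: ub0.
exists 1 => _ [a [Pa a1] <-].
by apply: (le_trans (@set_dist_le a 0 _ (ub0 Q0))); rewrite subr0.
Qed.

Lemma sd_le_gapl {P Q a} : P 0 -> Q 0 -> unit_ball P a ->
  set_dist a (unit_ball Q) <= gap P Q.
Proof.
move=> P0 Q0 Pa; rewrite /gap /hausdorff_dist le_max; apply/orP; left.
by have /ubP := sup_upper_bound (has_sup_sd P0 Q0); apply; exists a.
Qed.

Lemma gapC P Q : gap P Q = gap Q P.
Proof. by rewrite /gap /hausdorff_dist maxC. Qed.

Lemma sd_le_gapr {P Q b} : P 0 -> Q 0 -> unit_ball Q b ->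
  set_dist b (unit_ball P) <= gap P Q.
Proof. by move=> P0 Q0 Qb; rewrite gapC; exact: sd_le_gapl. Qed.

Lemma gap_ge0 {P Q} : P 0 -> Q 0 -> 0 <= gap P Q.
Proof.
move=> P0 Q0; apply: le_trans (sd_le_gapl P0 Q0 (ub0 P0)).
by apply: set_dist_ge0; exists 0; exact: ub0.
Qed.

Lemma gap_le {P Q} r : P 0 -> Q 0 ->
  (forall a, unit_ball P a -> set_dist a (unit_ball Q) <= r) ->
  (forall b, unit_ball Q b -> set_dist b (unit_ball P) <= r) -> gap P Q <= r.
Proof.
move=> P0 Q0 H1 H2; rewrite /gap /hausdorff_dist ge_max; apply/andP; split.
  by apply: ge_sup; [exists (set_dist 0 (unit_ball Q)); exists 0 => //; exact: ub0|move=> _ [a Pa <-]; exact: H1].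
by apply: ge_sup; [exists (set_dist 0 (unit_ball P)); exists 0 => //; exact: ub0|move=> _ [a Pa <-]; exact: H2].
Qed.

End GapLemmas.

Lemma le_of_small {R : realType} (x y K : R) : 0 <= K ->
  (forall h, 0 < h -> h <= 1 -> x <= y + h * K) -> x <= y.
Proof.
move=> K0 H; apply/ler_addgt0Pr => e e0.
have K1 : 0 < K + 1 by lra.
set h := Num.min 1 (e / (K + 1)).
have h0 : 0 < h by rewrite lt_min ltr01 divr_gt0.
have h1 : h <= 1 by rewrite ge_min lexx.
have h2 : h <= e / (K + 1) by rewrite ge_min lexx orbT.
apply: (le_trans (H h h0 h1)); rewrite lerD2l.
have : h * (K + 1) <= e by rewrite -ler_pdivlMr.
nra.
Qed.


Section Sub.
Context {R : realType} {Z : normedModType R}.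

Lemma gap_scale (E F : closed_subspace Z) e h : cs_set E e -> 0 < h ->
  exists2 f, cs_set F f & `|e - f| <= `|e| * (gap (cs_set E) (cs_set F) + h).
Proof.
move=> Ee h0; have [->|e0] := eqVneq e 0.
  by exists 0; [exact: cs_0 | rewrite subr0 normr0 mul0r].
have ne0 : 0 < `|e| by rewrite normr_gt0.
set a := `|e|^-1 *: e.
have ua : unit_ball (cs_set E) a.
  split; first exact: csZ.
  by rewrite /a normrZ normfV normr_id mulVf ?normr_eq0.
have hs := sd_le_gapl (cs_0 E) (cs_0 F) ua.
have [b ub hb] := set_dist_approx a _ _ (ex_intro _ 0 (ub0 (cs_0 F))) h0.
exists (`|e| *: b); first exact: csZ ub.1.
have -> : e - `|e| *: b = `|e| *: (a - b).
  by rewrite scalerBr /a scalerA mulfV ?normr_eq0 // scale1r.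
rewrite normrZ normr_id; apply: ler_wpM2l; first exact: normr_ge0.
lra.
Qed.

Lemma qnormE (E : closed_subspace Z) (q : quot_space E) : `|q| = qnorm q.
Proof. by []. Qed.

Lemma qpi_le (E : closed_subspace Z) z : `|qpi E z| <= `|z|.
Proof.
rewrite qnormE; apply: qnorm_le; rewrite /= /coset /= subrr; exact: cs_0.
Qed.

Lemma quot_le (E F : closed_subspace Z) z :
  `|qpi F z| <= `|qpi E z| + 2 * gap (cs_set E) (cs_set F) * `|z|.
Proof.
set L := gap (cs_set E) (cs_set F).
have L0 : 0 <= L := gap_ge0 (cs_0 E) (cs_0 F).
apply: (@le_of_small _ _ _ (2 + 2 * `|z| + L)).
  by have := normr_ge0 z; lra.
move=> h h0 h1.
have [w qw hw] := qnorm_approx (qpi E z) h0.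
have Ee : cs_set E (z - w) by rewrite -opprB; apply: csN.
have qz := qpi_le E z; rewrite qnormE in qz.
have [f Ff hf] := gap_scale _ F _ _ Ee h0.
have hF : qnorm (qpi F z) <= `|z - f|.
  apply: qnorm_le; rewrite /= /coset /= addrAC subrr add0r; exact: csN.
have hzf : `|z - f| <= `|w| + `|z - w - f|.
  have -> : z - f = w + (z - w - f) by rewrite addrA [w + _]addrC subrK.
  exact: ler_normD.
have he : `|z - w| <= `|z| + `|w| := ler_normB z w.
have p1 : `|z - w| * (L + h) <= (2 * `|z| + h) * (L + h).
  by apply: ler_wpM2r; lra.
have p2 : h * h <= h * 1 by apply: ler_wpM2l; lra.
rewrite !qnormE.
have p3 : (2 * `|z| + h) * (L + h) = 2 * L * `|z| + h * (2 * `|z| + L) + h * h by ring.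
have p4 : h * (2 + 2 * `|z| + L) = h * (2 * `|z| + L) + h * 2 by ring.
rewrite -/L in hf; rewrite p4; lra.
Qed.

End Sub.

Section Emb.
Context {R : realType} {W0 : completeNormedModType R} {Z : normedModType R}.
Variables (A B : Z -> W0) (c : R) (HP : ghyp A B c) (X : lmodType R) (f : {linear X -> W0}).

Local Notation GG := (@glued R W0 Z A B c HP).

Definition embl (x : X) : GG := (f x, 0).
Definition embr (x : X) : GG := (0, f x).

Lemma embl_lin : linear embl.
Proof.
move=> a u v; rewrite /embl linearP.
by change ((a *: f u + f v, 0) = (a *: f u + f v, a *: (0 : W0) + 0) :> (W0 * W0)%type); rewrite scaler0 addr0.
Qed.
Lemma embr_lin : linear embr.
Proof.
move=> a u v; rewrite /embr linearP.
by change ((0, a *: f u + f v) = (a *: (0 : W0) + 0, a *: f u + f v) :> (W0 * W0)%type); rewrite scaler0 addr0.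
Qed.

HB.instance Definition _ := GRing.isLinear.Build R X GG *:%R embl embl_lin.
HB.instance Definition _ := GRing.isLinear.Build R X GG *:%R embr embr_lin.

End Emb.

Theorem theorem4p1 (R : realType) (Z : completeNormedModType R)
    (E F : closed_subspace Z) :
  kadets_dist (quot_space E) (quot_space F) <= 2 * gap (cs_set E) (cs_set F).
Proof.
set L := gap (cs_set E) (cs_set F).
have L0 : 0 <= L := gap_ge0 (cs_0 E) (cs_0 F).
rewrite /kadets_dist.
set S := [set r | _].
case: (pselect (S !=set0)) => [[r0 [W0 [U0 [V0 [hU hV _]]]]] | S0]; last first.
  have -> : S = set0 by apply/seteqP; split => // r Sr; apply: S0; exists r.
  by rewrite inf0; lra.
have Slb : has_lbound S.
  exists 0 => r [W [U [V [_ _ ->]]]]; apply: gap_ge0; exists 0 => //; exact: linear0.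
apply/ler_addgt0Pr => eps eps0.
set c := 2 * L + eps.
pose A := fun z : Z => U0 (qpi E z).
pose B := fun z : Z => V0 (qpi F z).
have HP : ghyp A B c.
  split.
  - by move=> a x y; rewrite /A -qpiD -qpiZ linearP.
  - by move=> a x y; rewrite /B -qpiD -qpiZ linearP.
  - by move=> z; rewrite /A hU; exact: qpi_le.
  - by move=> z; rewrite /B hV; exact: qpi_le.
  - by rewrite /c; lra.
have hAB : forall z, `|A z| <= `|B z| + c * `|z|.
  move=> z; rewrite /A /B hU hV; have := quot_le F E z; rewrite gapC -/L.
  have : 0 <= eps * `|z| by rewrite mulr_ge0 // ltW.
  by rewrite /c mulrDl; lra.
have hBA : forall z, `|B z| <= `|A z| + c * `|z|.
  move=> z; rewrite /A /B hU hV; have := quot_le E F z; rewrite -/L.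
  have : 0 <= eps * `|z| by rewrite mulr_ge0 // ltW.
  by rewrite /c mulrDl; lra.
have isoU : isometric_embedding ((@embl R W0 Z A B c HP _ U0)).
  by move=> x; change (gn A B c HP (U0 x, 0) = `|x|); rewrite gn_l // hU.
have isoV : isometric_embedding ((@embr R W0 Z A B c HP _ V0)).
  by move=> x; change (gn A B c HP (0, V0 x) = `|x|); rewrite gn_r // hV.
have SW : S (gap (range ((@embl R W0 Z A B c HP _ U0))) (range ((@embr R W0 Z A B c HP _ V0)))).
  by exists (glued A B c HP), ((@embl R W0 Z A B c HP _ U0)), ((@embr R W0 Z A B c HP _ V0)).
apply: le_trans (ge_inf Slb SW) _.
have c0 : 0 < c by rewrite /c; lra.
set Ul := (@embl R W0 Z A B c HP _ U0) in isoU SW *.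
set Vr := (@embr R W0 Z A B c HP _ V0) in isoV SW *.
apply: gap_le.
- by exists 0 => //; exact: linear0.
- by exists 0 => //; exact: linear0.
- move=> _ [[u _ <-] ua]; rewrite isoU in ua.
  apply: (@le_of_small _ _ _ (1 + c)); first by lra.
  move=> h h0 h1.
  have [z qz hz] := qnorm_approx u h0.
  have uz : u = qpi E z.
    rewrite -(qrepK u) in qz *; apply/esym/qpi_eq; exact: qz.
  subst u.
  set t := (1 + h)^-1.
  have t0 : 0 < t by rewrite /t invr_gt0; lra.
  have th : t * (1 + h) = 1 by rewrite /t mulVf //; lra.
  have qF := qpi_le F z.
  have qE : `|z| <= 1 + h by rewrite -qnormE in hz; lra.
  set y := t *: qpi F z.
  have yb : unit_ball (range Vr) (Vr y).
    split; first by exists y.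
    rewrite isoV /y normrZ ger0_norm; last exact: ltW.
    have : t * `|qpi F z| <= t * (1 + h) by apply: ler_wpM2l; lra.
    lra.
  apply: le_trans (set_dist_le _ _ _ yb) _.
  apply: le_trans (gn_ub A B c HP _ z) _.
  rewrite /gval /= /A /B subr0 subrr normr0 add0r sub0r (addrC (- V0 y)) -linearB hV /y.
  have -> : qpi F z - t *: qpi F z = (1 - t) *: qpi F z by rewrite scalerBl scale1r.
  have e1 : 1 - t = t * h.
    have e : t * (1 + h) = t + t * h by ring.
    lra.
  rewrite e1 normrZ ger0_norm; last by apply: mulr_ge0; lra.
  have p1 : t * h * `|qpi F z| <= t * h * (1 + h).
    by apply: ler_wpM2l; [apply: mulr_ge0; lra | lra].
  have p2 : t * h * (1 + h) = h by rewrite -mulrA (mulrC h) mulrA th mul1r.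
  have p3 : c * `|z| <= c * (1 + h) by apply: ler_wpM2l; lra.
  lra.
- move=> _ [[v _ <-] vb]; rewrite isoV in vb.
  apply: (@le_of_small _ _ _ (1 + c)); first by lra.
  move=> h h0 h1.
  have [z qz hz] := qnorm_approx v h0.
  have vz : v = qpi F z.
    rewrite -(qrepK v) in qz *; apply/esym/qpi_eq; exact: qz.
  subst v.
  set t := (1 + h)^-1.
  have t0 : 0 < t by rewrite /t invr_gt0; lra.
  have th : t * (1 + h) = 1 by rewrite /t mulVf //; lra.
  have qE := qpi_le E z.
  have qF : `|z| <= 1 + h by rewrite -qnormE in hz; lra.
  set y := t *: qpi E z.
  have yb : unit_ball (range Ul) (Ul y).
    split; first by exists y.
    rewrite isoU /y normrZ ger0_norm; last exact: ltW.
    have : t * `|qpi E z| <= t * (1 + h) by apply: ler_wpM2l; lra.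
    lra.
  apply: le_trans (set_dist_le _ _ _ yb) _.
  apply: le_trans (gn_ub A B c HP _ (- z)) _.
  rewrite /gval /= (AN _ _ _ HP) (BN _ _ _ HP) normrN /A /B.
  rewrite subr0 subrr normr0 addr0 sub0r opprK (addrC (- U0 y)) -linearB hU /y.
  have -> : qpi E z - t *: qpi E z = (1 - t) *: qpi E z by rewrite scalerBl scale1r.
  have e1 : 1 - t = t * h.
    have e : t * (1 + h) = t + t * h by ring.
    lra.
  rewrite e1 normrZ ger0_norm; last by apply: mulr_ge0; lra.
  have p1 : t * h * `|qpi E z| <= t * h * (1 + h).
    by apply: ler_wpM2l; [apply: mulr_ge0; lra | lra].
  have p2 : t * h * (1 + h) = h by rewrite -mulrA (mulrC h) mulrA th mul1r.
  have p3 : c * `|z| <= c * (1 + h) by apply: ler_wpM2l; lra.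
  lra.
Qed.
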